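(* Let $N, M_d\ge 1$ be integers, let $P_s,P_r,\sigma_r^2,\sigma_d^2>0$ and $\varepsilon\ge 0$ be real numbers, let $\tilde{\mathbf H}_{rd}\in\mathbb C^{M_d\times N}$ and let $\mathbf g\in\mathbb C^{N}$ with $\mathbf g\neq\mathbf 0$. Consider the optimization problem $$\max_{\mathbf W\in\mathbb C^{N\times N},\,\mathbf r\in\mathbb C^{M_d}}\ \min_{\Delta\mathbf H\in\mathbb C^{M_d\times N},\ \|\Delta \mathbf H\|_F\leq \varepsilon}\ \frac{P_s|\mathbf r^H(\tilde {\mathbf H}_{rd}+\Delta \mathbf H)\mathbf W\mathbf g|^2}{\sigma_r^2\|\mathbf r^H(\tilde {\mathbf H}_{rd}+\Delta \mathbf H)\mathbf W\|_2^2+\sigma_d^2}$$ subject to $[P_s\mathbf W\mathbf g\mathbf g^H\mathbf W^H+\sigma_r^2\mathbf W\mathbf W^H]_{i,i}\leq P_r$ for all $i=1,\dots,N$, and $\|\mathbf r\|_2=1$. Then the optimal $\mathbf W$ of this problem is given by $$\mathbf W=\frac{\tilde P_r}{\|\mathbf g\|_2}\,\mathbf w\, \mathbf g^H$$ for some $\mathbf w=[w_1,\dots,w_N]^T\in\mathbb C^N$, where $\tilde P_r= \sqrt{\frac{P_r}{P_s\|\mathbf g\|_2^2+\sigma_r^2}}$.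
   Context: $[\mathbf A]_{i,i}$ denotes the $i$-th diagonal entry of a matrix $\mathbf A$; $(\cdot)^H$ is the conjugate transpose; $\|\cdot\|_2$ is the Euclidean norm and $\|\cdot\|_F$ the Frobenius norm. This problem models a two-hop amplify-and-forward relay with $N$ relay antennas, relay beamforming matrix $\mathbf W$, receive beamformer $\mathbf r$, effective first-hop channel $\mathbf g$, estimated second-hop channel $\tilde{\mathbf H}_{rd}$ with norm-bounded error $\Delta\mathbf H$, and per-antenna relay power limit $P_r$. *)

(* Defs.v *)
From HB Require Import structures.
From mathcomp Require Import all_boot all_order all_algebra.
From mathcomp Require Import all_classical all_reals.
From mathcomp.real_closed Require Import complex.
Set Implicit Arguments. Unset Strict Implicit. Unset Printing Implicit Defensive.
Import Order.TTheory GRing.Theory Num.Theory.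
Local Open Scope ring_scope.
Local Open Scope complex_scope.

Section Relay.
Variable R : realType.
Local Notation C := R[i].

Definition hermT m n (A : 'M[C]_(m, n)) : 'M[C]_(n, m) :=
  \matrix_(i < n, j < m) (A j i)^*.

Definition cabs2 (z : C) : R := ComplexField.Normc.normc z ^+ 2.

(* Frobenius norm (= Euclidean 2-norm for row/column vectors) *)
Definition frob m n (A : 'M[C]_(m, n)) : R :=
  Num.sqrt (\sum_(i < m) \sum_(j < n) cabs2 (A i j)).

Definition sinr (Md N : nat) (Ps sr2 sd2 : R) (Ht : 'M[C]_(Md, N))
  (g : 'cV[C]_N) (W : 'M[C]_N) (r : 'cV[C]_Md) (dH : 'M[C]_(Md, N)) : R :=
  let a := hermT r *m (Ht + dH) *m W in
  Ps * cabs2 ((a *m g) 0 0) / (sr2 * frob a ^+ 2 + sd2).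

(* worst-case SINR: min over ||dH||_F <= eps (attained; written as inf) *)
Definition robust_sinr (Md N : nat) (Ps sr2 sd2 eps : R) (Ht : 'M[C]_(Md, N))
  (g : 'cV[C]_N) (W : 'M[C]_N) (r : 'cV[C]_Md) : R :=
  inf [set sinr Ps sr2 sd2 Ht g W r dH | dH in [set dH : 'M[C]_(Md, N) | frob dH <= eps]]%classic.

Definition feasible (Md N : nat) (Ps Pr sr2 : R) (g : 'cV[C]_N)
  (W : 'M[C]_N) (r : 'cV[C]_Md) : Prop :=
  (forall i : 'I_N,
     (Ps%:C *: (W *m g *m hermT g *m hermT W) + sr2%:C *: (W *m hermT W)) i i
       <= Pr%:C) /\ frob r = 1.

Definition optimal (Md N : nat) (Ps Pr sr2 sd2 eps : R) (Ht : 'M[C]_(Md, N))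
  (g : 'cV[C]_N) (W : 'M[C]_N) (r : 'cV[C]_Md) : Prop :=
  feasible Ps Pr sr2 g W r /\
  forall (W' : 'M[C]_N) (r' : 'cV[C]_Md), feasible Ps Pr sr2 g W' r' ->
    robust_sinr Ps sr2 sd2 eps Ht g W' r' <= robust_sinr Ps sr2 sd2 eps Ht g W r.

End Relay.

(* Main.v *)
Require Import Defs.
From HB Require Import structures.
From mathcomp Require Import all_boot all_order all_algebra.
From mathcomp Require Import all_classical all_reals all_analysis.
From mathcomp.real_closed Require Import complex.
From mathcomp Require Import ring lra.
Set Implicit Arguments. Unset Strict Implicit. Unset Printing Implicit Defensive.
Import Order.TTheory GRing.Theory Num.Theory.
Import numFieldNormedType.Exports.
Local Open Scope ring_scope.
Local Open Scope complex_scope.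

Section Alg.
Variable R : realType.
Local Notation C := R[i].
Local Notation cRe := (@complex.Re R).
Local Notation cIm := (@complex.Im R).

Lemma RCM (a b : R) : (a * b)%:C = a%:C * b%:C :> C.
Proof. exact: rmorphM. Qed.
Lemma RCD (a b : R) : (a + b)%:C = a%:C + b%:C :> C.
Proof. exact: rmorphD. Qed.
Lemma RCB (a b : R) : (a - b)%:C = a%:C - b%:C :> C.
Proof. exact: rmorphB. Qed.
Lemma RCN (a : R) : (- a)%:C = - a%:C :> C.
Proof. exact: rmorphN. Qed.
Lemma RCS (I : finType) (F : I -> R) : (\sum_i F i)%:C = \sum_i (F i)%:C :> C.
Proof. exact: rmorph_sum. Qed.
Lemma RCn n : (n%:R : R)%:C = n%:R :> C.
Proof. exact: rmorph_nat. Qed.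

Lemma cabs2E (z : C) : cabs2 z = cRe z ^+ 2 + cIm z ^+ 2.
Proof. by case: z => a b; rewrite /cabs2 /= sqr_sqrtr // addr_ge0 ?sqr_ge0. Qed.

Lemma cabs2_ge0 (z : C) : 0 <= cabs2 z.
Proof. by rewrite cabs2E addr_ge0 ?sqr_ge0. Qed.

Lemma cabs2C (z : C) : (cabs2 z)%:C = z * conjc z.
Proof.
case: z => a b; rewrite cabs2E /=.
apply/eqP; rewrite eq_complex /=; apply/andP; split; apply/eqP; ring.
Qed.

Lemma cabs2M (x y : C) : cabs2 (x * y) = cabs2 x * cabs2 y.
Proof. by apply: complexI; rewrite [RHS]RCM !cabs2C rmorphM /=; ring. Qed.

Lemma cabs2J (x : C) : cabs2 (conjc x) = cabs2 x.
Proof. by apply: complexI; rewrite !cabs2C conjcK mulrC. Qed.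

Lemma cabs2R (x : R) : cabs2 (x%:C) = x ^+ 2.
Proof. by rewrite cabs2E /= expr0n /= addr0. Qed.

Lemma normcE (z : C) : ComplexField.Normc.normc z = Num.sqrt (cabs2 z).
Proof. by rewrite cabs2E; case: z. Qed.

Lemma normc_ge0 (z : C) : 0 <= ComplexField.Normc.normc z.
Proof. by rewrite normcE sqrtr_ge0. Qed.

Lemma cabs2_sqrt (z : C) : cabs2 z = ComplexField.Normc.normc z ^+ 2.
Proof. by []. Qed.

Lemma dsum (I J : finType) (p : I -> C) (q : J -> C) :
  \sum_k \sum_l p k * q l = (\sum_k p k) * (\sum_l q l).
Proof. by rewrite big_distrlr. Qed.

Lemma dsum' (I : finType) (p q : I -> C) :
  \sum_k \sum_l p l * q k = (\sum_k p k) * (\sum_l q l).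
Proof. by rewrite exchange_big big_distrlr. Qed.

Lemma sum4 (I : finType) (a b c e : I -> I -> C) :
  \sum_k \sum_l (a k l + b k l - c k l - e k l) =
  \sum_k \sum_l a k l + \sum_k \sum_l b k l - \sum_k \sum_l c k l - \sum_k \sum_l e k l.
Proof.
under eq_bigr => k _ do rewrite !(sumrB, big_split) /=.
by rewrite !(sumrB, big_split).
Qed.

Lemma CS (I : finType) (x y : I -> C) :
  cabs2 (\sum_k x k * y k) <= (\sum_k cabs2 (x k)) * (\sum_k cabs2 (y k)).
Proof.
pose d k l := x k * conjc (y l) - x l * conjc (y k).
have E : (\sum_k \sum_l cabs2 (d k l))%:C =
   2%:R * (((\sum_k cabs2 (x k)) * (\sum_k cabs2 (y k)))%:C
           - (cabs2 (\sum_k x k * y k))%:C).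
  rewrite rmorph_sum /=.
  transitivity (\sum_k \sum_l (x k * conjc (x k) * (y l * conjc (y l))
     + x l * conjc (x l) * (y k * conjc (y k))
     - x k * y k * conjc (x l * y l) - x l * y l * conjc (x k * y k))).
    apply: eq_bigr => k _; rewrite rmorph_sum /=; apply: eq_bigr => l _.
    by rewrite cabs2C /d !rmorphB !rmorphM /= !conjcK; ring.
  rewrite sum4 !dsum !dsum' -!(rmorph_sum conjc) /=.
  rewrite [X in _ = _ * (X - _)]RCM !RCS cabs2C.
  under [X in _ = _ * (X * _ - _)]eq_bigr => k _ do rewrite cabs2C.
  under [X in _ = _ * (_ * X - _)]eq_bigr => k _ do rewrite cabs2C.
  ring.
have : 0 <= \sum_k \sum_l cabs2 (d k l).
  by apply: sumr_ge0 => k _; apply: sumr_ge0 => l _; exact: cabs2_ge0.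
rewrite -ler0c E -RCB -(RCn 2) -RCM ler0c.
by rewrite pmulr_rge0 ?ltr0n // subr_ge0.
Qed.


Definition nsq n (x : 'cV[C]_n) : R := \sum_i cabs2 (x i 0).
Definition nc (z : C) : R := Num.sqrt (cabs2 z).

Lemma nsq_ge0 n (x : 'cV[C]_n) : 0 <= nsq x.
Proof. by apply: sumr_ge0 => i _; exact: cabs2_ge0. Qed.

Lemma nc_ge0 z : 0 <= nc z. Proof. exact: sqrtr_ge0. Qed.
Lemma nc_sqr z : nc z ^+ 2 = cabs2 z.
Proof. by rewrite sqr_sqrtr // cabs2_ge0. Qed.

Lemma fs_ge0 m n (A : 'M[C]_(m, n)) : 0 <= \sum_i \sum_j cabs2 (A i j).
Proof. by do 2![apply: sumr_ge0 => ? _]; exact: cabs2_ge0. Qed.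

Lemma frob_sqr m n (A : 'M[C]_(m, n)) : frob A ^+ 2 = \sum_i \sum_j cabs2 (A i j).
Proof. by rewrite sqr_sqrtr // fs_ge0. Qed.

Lemma frob_ge0 m n (A : 'M[C]_(m, n)) : 0 <= frob A.
Proof. exact: sqrtr_ge0. Qed.

Lemma frob_col n (x : 'cV[C]_n) : frob x = Num.sqrt (nsq x).
Proof. by rewrite /frob /nsq; congr Num.sqrt; apply: eq_bigr => i _; rewrite big_ord1. Qed.

Lemma frob_col_sqr n (x : 'cV[C]_n) : frob x ^+ 2 = nsq x.
Proof. by rewrite frob_col sqr_sqrtr // nsq_ge0. Qed.

Lemma frob_row_sqr n (a : 'M[C]_(1, n)) : frob a ^+ 2 = \sum_j cabs2 (a 0 j).
Proof. by rewrite frob_sqr big_ord1. Qed.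

Lemma hermT_mul m n p (A : 'M[C]_(m, n)) (B : 'M[C]_(n, p)) :
  hermT (A *m B) = hermT B *m hermT A.
Proof.
apply/matrixP => i j; rewrite !mxE rmorph_sum; apply: eq_bigr => k _.
by rewrite !mxE rmorphM mulrC.
Qed.

Lemma hermTE m n (A : 'M[C]_(m, n)) i j : hermT A i j = conjc (A j i).
Proof. by rewrite mxE. Qed.

Lemma rowCS m n (A : 'M[C]_(m, n)) (x : 'cV[C]_n) i :
  cabs2 ((A *m x) i 0) <= (\sum_j cabs2 (A i j)) * nsq x.
Proof. by rewrite mxE; exact: CS. Qed.

Lemma hx_x n (x : 'cV[C]_n) : hermT x *m x = ((nsq x)%:C)%:M.
Proof.
apply/matrixP => i j; rewrite !ord1 !mxE eqxx mulr1n RCS.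
by apply: eq_bigr => k _; rewrite mxE cabs2C mulrC.
Qed.

Lemma nsq_herm n (x : 'cV[C]_n) : \sum_j cabs2 (hermT x 0 j) = nsq x.
Proof. by apply: eq_bigr => j _; rewrite mxE cabs2J. Qed.

Lemma scal11 n (B : 'M[C]_1) (M : 'M[C]_(1, n)) : B *m M = B 0 0 *: M.
Proof. by rewrite {1}(mx11_scalar B) mul_scalar_mx. Qed.

Lemma nc_le_sqrt (z : C) (b : R) : cabs2 z <= b ^+ 2 -> 0 <= b -> nc z <= b.
Proof.
move=> h b0; rewrite /nc -(ger0_norm b0) -sqrtr_sqr.
by rewrite ler_sqrt // sqr_ge0.
Qed.

Lemma sqrt_le_nc (z : C) (b : R) : b ^+ 2 <= cabs2 z -> 0 <= b -> b <= nc z.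
Proof.
move=> h b0; rewrite /nc -(ger0_norm b0) -sqrtr_sqr.
by rewrite ler_sqrt // cabs2_ge0.
Qed.

Lemma ncD (x y : C) : nc (x + y) <= nc x + nc y.
Proof.
rewrite /nc -!normcE; exact: le_normcD.
Qed.


Lemma cabs2_0 : cabs2 (0 : C) = 0.
Proof. by rewrite -(rmorph0 (real_complex R)) cabs2R expr0n. Qed.

Lemma cabs2N (x : C) : cabs2 (- x) = cabs2 x.
Proof. by apply: complexI; rewrite !cabs2C rmorphN /= mulrNN. Qed.

Lemma cabs2_eq0 (x : C) : cabs2 x = 0 -> x = 0.
Proof.
move=> h; have : x * conjc x = 0 by rewrite -cabs2C h.
by move/eqP; rewrite mulf_eq0 conjc_eq0 orbb => /eqP.
Qed.

Lemma ncM x y : nc (x * y) = nc x * nc y.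
Proof. by rewrite /nc cabs2M sqrtrM // cabs2_ge0. Qed.

Lemma ncR (a : R) : nc a%:C = `|a|.
Proof. by rewrite /nc cabs2R sqrtr_sqr. Qed.

Lemma ncN x : nc (- x) = nc x.
Proof. by rewrite /nc cabs2N. Qed.

Lemma nc0 : nc 0 = 0.
Proof. by rewrite /nc cabs2_0 sqrtr0. Qed.

Lemma frob0 m n : frob (0 : 'M[C]_(m, n)) = 0.
Proof.
rewrite /frob big1 ?sqrtr0 // => i _; rewrite big1 // => j _.
by rewrite mxE cabs2_0.
Qed.

Lemma frob_eq m n (A : 'M[C]_(m, n)) (a : R) : 0 <= a -> frob A ^+ 2 = a ^+ 2 -> frob A = a.
Proof.
move=> a0 h; rewrite -(ger0_norm a0) -sqrtr_sqr -h sqrtr_sqr ger0_norm //.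
exact: frob_ge0.
Qed.

Lemma hermTZ m n (a : C) (A : 'M[C]_(m, n)) : hermT (a *: A) = conjc a *: hermT A.
Proof. by apply/matrixP => i j; rewrite !mxE rmorphM. Qed.

Lemma sq_mono (a b : R) : 0 <= a -> a <= b -> a ^+ 2 <= b ^+ 2.
Proof. by move=> a0 ab; rewrite !expr2 ler_pM. Qed.

Lemma max0_mono (a b : R) : a <= b -> Num.max 0 a <= Num.max 0 b.
Proof.
move=> ab; rewrite ge_max le_max lexx /= le_max ab orbT //.
Qed.

End Alg.

Section Cont.
Variables (R : realType) (n : nat).
Local Notation C := R[i].
Local Notation T := 'rV[R]_n.
Local Notation cRe := (@complex.Re R).
Local Notation cIm := (@complex.Im R).

Definition rc (h : T -> R) := continuous h.

Lemma rc_cst a : rc (fun _ => a).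
Proof. exact: cst_continuous. Qed.

Lemma rc_coord i : rc (fun v : T => v ord0 i).
Proof. exact: coord_continuous. Qed.

Lemma rc_add a b : rc a -> rc b -> rc (fun v => a v + b v).
Proof. move=> ha hb x; have := @continuousD R R^o _ a b x (ha x) (hb x). exact. Qed.

Lemma rc_mul a b : rc a -> rc b -> rc (fun v => a v * b v).
Proof. move=> ha hb x; have := @continuousM R _ a b x (ha x) (hb x). exact. Qed.

Lemma rc_opp a : rc a -> rc (fun v => - a v).
Proof. move=> ha x; have := @continuousN R R^o _ a x (ha x). exact. Qed.

Lemma rc_sqrt a : rc a -> rc (fun v => Num.sqrt (a v)).
Proof. by move=> ha x; apply: (continuous_comp (ha x)); exact: sqrt_continuous. Qed.

Lemma rc_max a b : rc a -> rc b -> rc (fun v => Num.max (a v) (b v)).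
Proof. move=> ha hb x; have := @continuous_max _ _ a b x (ha x) (hb x). exact. Qed.

Lemma rc_inv a : (forall v, a v != 0) -> rc a -> rc (fun v => (a v)^-1).
Proof. move=> h ha x; have := @continuousV R _ a x (h x) (ha x). exact. Qed.

Lemma rc_sum (I : Type) (s : seq I) (F : I -> T -> R) :
  (forall i, rc (F i)) -> rc (fun v => \sum_(i <- s) F i v).
Proof.
move=> hF; elim: s => [|i s ih].
  by under [X in rc X]funext => v do rewrite big_nil; exact: rc_cst.
under [X in rc X]funext => v do rewrite big_cons.
exact: rc_add.
Qed.

Definition ccr (h : T -> C) := rc (fun v => cRe (h v)) /\ rc (fun v => cIm (h v)).

Lemma cc_mk a b : rc a -> rc b -> ccr (fun v => a v +i* b v).
Proof. by move=> ha hb; split. Qed.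

Lemma ReM (x y : C) : cRe (x * y) = cRe x * cRe y - cIm x * cIm y.
Proof. by case: x => a b; case: y => c d. Qed.
Lemma ImM (x y : C) : cIm (x * y) = cRe x * cIm y + cIm x * cRe y.
Proof. by case: x => a b; case: y => c d. Qed.
Lemma ReD (x y : C) : cRe (x + y) = cRe x + cRe y.
Proof. by case: x => a b; case: y => c d. Qed.
Lemma ImD (x y : C) : cIm (x + y) = cIm x + cIm y.
Proof. by case: x => a b; case: y => c d. Qed.

Lemma cc_cst z : ccr (fun _ => z).
Proof. by split; exact: rc_cst. Qed.

Lemma cc_add a b : ccr a -> ccr b -> ccr (fun v => a v + b v).
Proof.
move=> [ha1 ha2] [hb1 hb2]; split.
  by under [X in rc X]funext => v do rewrite ReD; exact: rc_add.
by under [X in rc X]funext => v do rewrite ImD; exact: rc_add.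
Qed.

Lemma cc_mul a b : ccr a -> ccr b -> ccr (fun v => a v * b v).
Proof.
move=> [ha1 ha2] [hb1 hb2]; split.
  under [X in rc X]funext => v do rewrite ReM.
  by apply: rc_add; [exact: rc_mul|apply: rc_opp; exact: rc_mul].
under [X in rc X]funext => v do rewrite ImM.
by apply: rc_add; exact: rc_mul.
Qed.

Lemma cc_sum (I : Type) (s : seq I) (F : I -> T -> C) :
  (forall i, ccr (F i)) -> ccr (fun v => \sum_(i <- s) F i v).
Proof.
move=> hF; elim: s => [|i s ih].
  by under [X in ccr X]funext => v do rewrite big_nil; exact: cc_cst.
under [X in ccr X]funext => v do rewrite big_cons.
exact: cc_add.
Qed.

Lemma rc_cabs2 h : ccr h -> rc (fun v => cabs2 (h v)).
Proof.
move=> [h1 h2]; under [X in rc X]funext => v do rewrite cabs2E !expr2.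
by apply: rc_add; exact: rc_mul.
Qed.

Lemma rc_nc h : ccr h -> rc (fun v => nc (h v)).
Proof. by move=> hh; apply: rc_sqrt; exact: rc_cabs2. Qed.

End Cont.

Section Main.
Variables (R : realType) (N Md : nat) (Ps Pr sr2 sd2 eps : R).
Variables (Ht : 'M[R[i]]_(Md, N)) (g : 'cV[R[i]]_N).
Hypotheses (hMd : (0 < Md)%N) (hPs : 0 < Ps) (hPr : 0 < Pr) (hsr : 0 < sr2)
  (hsd : 0 < sd2) (heps : 0 <= eps) (hg : g != 0).
Local Notation C := R[i].

Let G := nsq g.

Lemma G_gt0 : 0 < G.
Proof.
rewrite lt_def nsq_ge0 andbT; apply/eqP => h; move/negP: hg; apply; apply/eqP.
apply/matrixP => i j; rewrite ord1 mxE; apply: cabs2_eq0.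
move/eqP: h; rewrite psumr_eq0; last by move=> k _; exact: cabs2_ge0.
by move/allP/(_ i (mem_index_enum _))/eqP.
Qed.

Let Gn0 : G != 0. Proof. by rewrite gt_eqF // G_gt0. Qed.

Definition Phi (X : R) := Ps * X / (sr2 * (X / G) + sd2).

Lemma Phi_mono X Y : 0 <= X -> X <= Y -> Phi X <= Phi Y.
Proof.
move=> X0 XY; rewrite /Phi.
have hG := G_gt0.
have dX : 0 < sr2 * (X / G) + sd2 by rewrite ltr_wpDl // mulr_ge0 ?divr_ge0 // ltW.
have dY : 0 < sr2 * (Y / G) + sd2.
  have Y0 : 0 <= Y by apply: le_trans XY.
  by rewrite ltr_wpDl // mulr_ge0 ?divr_ge0 // ltW.
rewrite ler_pdivrMr // mulrAC ler_pdivlMr //.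
have -> : Ps * X * (sr2 * (Y / G) + sd2) = Ps * X * Y * sr2 / G + Ps * X * sd2.
  by field.
have -> : Ps * Y * (sr2 * (X / G) + sd2) = Ps * X * Y * sr2 / G + Ps * Y * sd2.
  by field.
by rewrite lerD2l ler_wpM2r ?ler_wpM2l // ltW.
Qed.

Lemma sinr_ge0 W r dH : 0 <= sinr Ps sr2 sd2 Ht g W r dH.
Proof.
rewrite /sinr /=; apply: divr_ge0; first by rewrite mulr_ge0 ?cabs2_ge0 // ltW.
by apply: addr_ge0; [apply: mulr_ge0; [exact: ltW | exact: sqr_ge0] | exact: ltW].
Qed.

Lemma sinr_le W r dH :
  sinr Ps sr2 sd2 Ht g W r dH <=
  Phi (cabs2 (((hermT r *m (Ht + dH) *m W) *m g) 0 0)).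
Proof.
rewrite /sinr /Phi /=; set a := hermT r *m (Ht + dH) *m W.
set X := cabs2 _.
apply: ler_wpM2l; first by rewrite mulr_ge0 ?cabs2_ge0 // ltW.
have hG := G_gt0.
rewrite lef_pV2 ?posrE; last 2 first.
- by rewrite ltr_wpDl // mulr_ge0 ?sqr_ge0 // ltW.
- by rewrite ltr_wpDl // mulr_ge0 ?divr_ge0 ?cabs2_ge0 // ltW.
rewrite lerD2r; apply: ler_wpM2l; first exact: ltW.
rewrite ler_pdivrMr // frob_row_sqr.
exact: rowCS.
Qed.

Definition sc (r : 'cV[C]_Md) (dH : 'M[C]_(Md, N)) (u : 'cV[C]_N) :=
  (hermT r *m (Ht + dH) *m u) 0 0.
Definition s0 (r : 'cV[C]_Md) (u : 'cV[C]_N) := (hermT r *m (Ht *m u)) 0 0.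
Definition ee (r : 'cV[C]_Md) (dH : 'M[C]_(Md, N)) (u : 'cV[C]_N) :=
  (hermT r *m dH *m u) 0 0.

Lemma sc_split r dH u : sc r dH u = s0 r u + ee r dH u.
Proof. by rewrite /sc /s0 /ee mulmxDr mulmxDl mxE mulmxA. Qed.

Lemma rank1 u r dH :
  sinr Ps sr2 sd2 Ht g (u *m hermT g) r dH = Phi (G ^+ 2 * cabs2 (sc r dH u)).
Proof.
rewrite /sinr /Phi /sc /=; set b := hermT r *m (Ht + dH) *m u.
have ea : hermT r *m (Ht + dH) *m (u *m hermT g) = b 0 0 *: hermT g.
  by rewrite mulmxA scal11.
rewrite ea -scalemxAl hx_x frob_row_sqr.
have -> : \sum_j cabs2 ((b 0 0 *: hermT g) 0 j) = cabs2 (b 0 0) * G.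
  rewrite /G /nsq mulr_sumr; apply: eq_bigr => j _.
  by rewrite !mxE cabs2M cabs2J.
rewrite !mxE eqxx mulr1n cabs2M cabs2R -/G.
set c := cabs2 _.
have -> : G ^+ 2 * c / G = c * G by field.
by rewrite [G ^+ 2 * c]mulrC.
Qed.

Lemma ee_bound r dH u : cabs2 (ee r dH u) <= nsq r * (frob dH ^+ 2 * nsq u).
Proof.
rewrite /ee mxE.
have -> : \sum_j (hermT r *m dH) 0 j * u j 0 =
    \sum_i \sum_j dH i j * (conjc (r i 0) * u j 0).
  rewrite [RHS]exchange_big; apply: eq_bigr => j _; rewrite mxE big_distrl.
  by apply: eq_bigr => i _; rewrite mxE /=; ring.
rewrite pair_bigA; apply: le_trans (CS _ _) _.
rewrite -(pair_bigA _ (fun i j => cabs2 (dH i j))) -frob_sqr.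
rewrite -(pair_bigA _ (fun i j => cabs2 (conjc (r i 0) * u j 0))) /=.
have -> : \sum_i \sum_j cabs2 (conjc (r i 0) * u j 0) = nsq r * nsq u.
  rewrite /nsq big_distrlr; apply: eq_bigr => i _; apply: eq_bigr => j _.
  by rewrite cabs2M cabs2J.
by rewrite mulrCA.
Qed.

Lemma ee_outer (r : 'cV[C]_Md) (u : 'cV[C]_N) (c : C) :
  ee r (c *: (r *m hermT u)) u = c * (nsq r)%:C * (nsq u)%:C.
Proof.
rewrite /ee -scalemxAr -scalemxAl mulmxA hx_x mul_scalar_mx -scalemxAl hx_x.
by rewrite !mxE eqxx mulr1n mulrA.
Qed.

Lemma frob_outer (r : 'cV[C]_Md) (u : 'cV[C]_N) (c : C) :
  frob (c *: (r *m hermT u)) ^+ 2 = cabs2 c * nsq r * nsq u.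
Proof.
rewrite frob_sqr /nsq -mulrA big_distrlr mulr_sumr; apply: eq_bigr => i _.
rewrite mulr_sumr; apply: eq_bigr => j _.
by rewrite !mxE big_ord1 mxE !cabs2M cabs2J.
Qed.


Lemma ee0 r u : ee r 0 u = 0.
Proof. by rewrite /ee mulmx0 mul0mx mxE. Qed.

Lemma worst r u : nsq r = 1 -> exists dH : 'M[C]_(Md, N),
  frob dH <= eps /\ nc (sc r dH u) <= Num.max 0 (nc (s0 r u) - eps * frob u).
Proof.
move=> hr.
have [nu0|nu0] := eqVneq (frob u) 0.
  exists 0; rewrite frob0 heps; split => //.
  by rewrite sc_split ee0 addr0 nu0 mulr0 subr0 le_max lexx orbT.
have nup : 0 < frob u by rewrite lt_def nu0 frob_ge0.
set n0 := nc (s0 r u).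
set t := Num.min n0 (eps * frob u).
pose kap := t / (n0 * frob u ^+ 2).
exists ((- (kap%:C * s0 r u)) *: (r *m hermT u)).
have hn0 : 0 <= n0 by exact: nc_ge0.
have ht0 : 0 <= t by rewrite le_min hn0 mulr_ge0 // ltW.
have htn : t <= n0 by rewrite ge_min lexx.
have hte : t <= eps * frob u by rewrite ge_min lexx orbT.
split.
  apply: (@le_trans _ _ `|kap * n0 * frob u|).
    rewrite le_eqVlt; apply/orP; left; apply/eqP.
    apply: frob_eq => //; rewrite frob_outer hr mulr1 cabs2N cabs2M cabs2R.
    by rewrite -nc_sqr -/n0 -frob_col_sqr real_normK ?num_real //; ring.
  have [n00|n0n0] := eqVneq n0 0.
    by rewrite n00 mulr0 mul0r normr0.
  have -> : kap * n0 * frob u = t / frob u.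
    by rewrite /kap; field; rewrite n0n0 nu0.
  by rewrite ger0_norm ?divr_ge0 ?frob_ge0 // ler_pdivrMr.
rewrite sc_split ee_outer hr mulr1 -frob_col_sqr.
have -> : s0 r u + - (kap%:C * s0 r u) * (frob u ^+ 2)%:C =
   s0 r u * (1 - kap * frob u ^+ 2)%:C.
  by rewrite [in RHS]RCB [in RHS]RCM rmorph1 /=; ring.
rewrite ncM ncR -/n0.
have [n00|n0n0] := eqVneq n0 0.
  by rewrite n00 mul0r le_max lexx.
have -> : n0 * `|1 - kap * frob u ^+ 2| = n0 - t.
  have -> : 1 - kap * frob u ^+ 2 = (n0 - t) / n0.
    by rewrite /kap; field; rewrite n0n0 nu0.
  rewrite normrM ger0_norm ?subr_ge0 // normfV ger0_norm //.
  by rewrite mulrC mulfVK.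
rewrite /t; case: (leP n0 (eps * frob u)) => h.
  by rewrite subrr le_max lexx.
by rewrite le_max lexx orbT.
Qed.

Lemma s0_le r u : nsq r = 1 -> nc (s0 r u) <= frob (Ht *m u).
Proof.
move=> hr; apply: nc_le_sqrt; last exact: frob_ge0.
rewrite frob_col_sqr; apply: le_trans (rowCS _ _ _) _.
by rewrite nsq_herm hr mul1r.
Qed.

Lemma best u : exists r, nsq r = 1 /\ nc (s0 r u) = frob (Ht *m u).
Proof.
set v := Ht *m u.
have [v0|v0] := eqVneq (nsq v) 0.
  pose i0 : 'I_Md := Ordinal hMd.
  have hr : nsq (delta_mx i0 0 : 'cV[C]_Md) = 1.
    rewrite /nsq (bigD1 i0) //= big1 ?addr0.
      by rewrite mxE !eqxx /= -(rmorph1 (real_complex R)) cabs2R expr1n.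
    by move=> i /negbTE hi; rewrite mxE hi /= cabs2_0.
  exists (delta_mx i0 0); split => //; apply/eqP; rewrite eq_le s0_le //=.
  by rewrite frob_col v0 sqrtr0 nc_ge0.
have vp : 0 < frob v by rewrite frob_col sqrtr_gt0 lt_def v0 nsq_ge0.
exists (((frob v)^-1)%:C *: v).
have -> : nsq (((frob v)^-1)%:C *: v) = (frob v)^-1 ^+ 2 * nsq v.
  rewrite /nsq mulr_sumr; apply: eq_bigr => i _.
  by rewrite mxE cabs2M cabs2R.
rewrite -frob_col_sqr exprVn mulVf ?expf_neq0 ?gt_eqF //; split => //.
rewrite /s0 -/v hermTZ conjc_real -scalemxAl hx_x !mxE eqxx mulr1n -RCM.
by rewrite ncR -frob_col_sqr expr2 mulKf ?gt_eqF // ger0_norm // ltW.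
Qed.


Lemma feasE W (r : 'cV[C]_Md) : feasible Ps Pr sr2 g W r <->
  (forall i, Ps * cabs2 ((W *m g) i 0) + sr2 * \sum_j cabs2 (W i j) <= Pr)
  /\ frob r = 1.
Proof.
have key i : (Ps%:C *: (W *m g *m hermT g *m hermT W) + sr2%:C *: (W *m hermT W)) i i
   = (Ps * cabs2 ((W *m g) i 0) + sr2 * \sum_j cabs2 (W i j))%:C.
  rewrite -mulmxA -hermT_mul !mxE big_ord1 !hermTE !mxE.
  rewrite RCD (RCM Ps) (RCM sr2) RCS cabs2C.
  congr (_ + _ * _); apply: eq_bigr => j _; by rewrite hermTE cabs2C.
split => [[h1 h2]|[h1 h2]]; split => // i.
  by move: (h1 i); rewrite key lecR.
by rewrite key lecR.
Qed.

Definition cc2 := Pr / (Ps * G + sr2) / G.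
Definition inbox (u : 'cV[C]_N) := forall i, cabs2 (u i 0) <= cc2.
Definition psi (u : 'cV[C]_N) := frob (Ht *m u) - eps * frob u.

Lemma Wg_rank1 (u : 'cV[C]_N) : u *m hermT g *m g = G%:C *: u.
Proof. by rewrite -mulmxA hx_x mul_mx_scalar. Qed.

Lemma feas_rank1 u (r : 'cV[C]_Md) : inbox u -> frob r = 1 -> feasible Ps Pr sr2 g (u *m hermT g) r.
Proof.
move=> hu hr; apply/feasE; split => // i.
rewrite Wg_rank1 mxE cabs2M cabs2R.
have -> : \sum_j cabs2 ((u *m hermT g) i j) = cabs2 (u i 0) * G.
  rewrite /G /nsq mulr_sumr; apply: eq_bigr => j _.
  by rewrite !mxE big_ord1 mxE cabs2M cabs2J.
have hG := G_gt0.
rewrite -subr_ge0.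
have -> : Pr - (Ps * (G ^+ 2 * cabs2 (u i 0)) + sr2 * (cabs2 (u i 0) * G)) =
   (cc2 - cabs2 (u i 0)) * (G * (Ps * G + sr2)).
  rewrite /cc2; field; rewrite Gn0 /=.
  by rewrite gt_eqF // ltr_wpDl ?mulr_ge0 // ltW.
rewrite mulr_ge0 ?subr_ge0 ?hu // mulr_ge0 // ?ltW //.
by rewrite ltr_wpDl ?mulr_ge0 // ltW.
Qed.

Lemma feas_box W (r : 'cV[C]_Md) : feasible Ps Pr sr2 g W r -> inbox (G^-1%:C *: (W *m g)).
Proof.
move=> /feasE [h _] i; have hG := G_gt0; have hi := h i.
rewrite mxE cabs2M cabs2R.
set X := cabs2 ((W *m g) i 0) in hi *. set Y := \sum_j cabs2 (W i j) in hi.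
have hX : X <= Y * G by exact: rowCS.
have hPG : 0 < Ps * G + sr2 by rewrite ltr_wpDl ?mulr_ge0 // ltW.
rewrite -subr_ge0.
have -> : cc2 - G^-1 ^+ 2 * X = (Pr * G - X * (Ps * G + sr2)) / (G ^+ 2 * (Ps * G + sr2)).
  rewrite /cc2; field; rewrite Gn0 /= gt_eqF //.
apply: divr_ge0; last by rewrite mulr_ge0 ?sqr_ge0 // ltW.
have h1 : (Ps * X + sr2 * Y) * G <= Pr * G by rewrite ler_wpM2r // ltW.
have h2 : sr2 * X <= sr2 * (Y * G) by rewrite ler_wpM2l // ltW.
have -> : Pr * G - X * (Ps * G + sr2) =
   (Pr * G - (Ps * X + sr2 * Y) * G) + (sr2 * (Y * G) - sr2 * X) by ring.
by rewrite addr_ge0 // subr_ge0.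
Qed.

Lemma main_opt (us : 'cV[C]_N) : inbox us -> (forall u, inbox u -> psi u <= psi us) ->
  exists r, optimal Ps Pr sr2 sd2 eps Ht g (us *m hermT g) r.
Proof.
move=> hus husm.
have [rs [hrs1 hrs2]] := best us.
have hG := G_gt0.
exists rs; split.
  by apply: feas_rank1 => //; rewrite frob_col hrs1 sqrtr1.
move=> W' r' hf.
have hr' : nsq r' = 1.
  by case/feasE: hf => _ h; rewrite -frob_col_sqr h expr1n.
set u' := G^-1%:C *: (W' *m g).
have hu' : inbox u' by exact: (feas_box hf).
have [dH0 [hdH0 hsc0]] := worst u' hr'.
set m := Num.max 0 (psi us).
have hm0 : 0 <= m by rewrite le_max lexx.
have lbS : forall W r, has_lbound [set sinr Ps sr2 sd2 Ht g W r dH | dH in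
     [set dH : 'M[C]_(Md, N) | frob dH <= eps]]%classic.
  by move=> W r; exists 0 => _ [dH _ <-]; exact: sinr_ge0.
apply: (@le_trans _ _ (Phi (G ^+ 2 * m ^+ 2))).
  have hmem : [set sinr Ps sr2 sd2 Ht g W' r' dH | dH in
     [set dH : 'M[C]_(Md, N) | frob dH <= eps]]%classic (sinr Ps sr2 sd2 Ht g W' r' dH0).
    by exists dH0.
  apply: le_trans (ge_inf (lbS W' r') hmem) _.
  apply: le_trans (sinr_le _ _ _) _.
  have -> : hermT r' *m (Ht + dH0) *m W' *m g = G%:C *: (hermT r' *m (Ht + dH0) *m u').
    by rewrite /u' -scalemxAr scalerA -RCM mulfV // scale1r mulmxA.
  rewrite mxE cabs2M cabs2R; apply: Phi_mono.
    by rewrite mulr_ge0 ?sqr_ge0 ?cabs2_ge0.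
  apply: ler_wpM2l; first exact: sqr_ge0.
  rewrite -nc_sqr; apply: sq_mono; first exact: nc_ge0.
  apply: le_trans hsc0 _; apply: max0_mono.
  apply: le_trans (husm _ hu'); rewrite /psi lerD2r.
  exact: s0_le.
apply: lb_le_inf.
  by exists (sinr Ps sr2 sd2 Ht g (us *m hermT g) rs 0), 0 => //=; rewrite frob0.
move=> _ [dH hdH <-]; rewrite rank1; apply: Phi_mono.
  by rewrite mulr_ge0 ?sqr_ge0.
apply: ler_wpM2l; first exact: sqr_ge0.
rewrite -nc_sqr; apply: sq_mono => //.
rewrite ge_max nc_ge0 /=.
have he : nc (ee rs dH us) <= eps * frob us.
  apply: nc_le_sqrt; last by rewrite mulr_ge0 ?frob_ge0.
  apply: le_trans (ee_bound _ _ _) _.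
  rewrite hrs1 mul1r exprMn -frob_col_sqr ler_wpM2r ?sqr_ge0 //.
  by apply: sq_mono => //; exact: frob_ge0.
have ht : nc (s0 rs us) <= nc (sc rs dH us) + nc (ee rs dH us).
  have -> : s0 rs us = sc rs dH us + - ee rs dH us by rewrite sc_split addrK.
  by apply: le_trans (ncD _ _) _; rewrite ncN.
rewrite /psi -hrs2; lra.
Qed.


Lemma cc2_gt0 : 0 < cc2.
Proof.
have hG := G_gt0.
by rewrite /cc2 !divr_gt0 // ltr_wpDl ?mulr_ge0 // ltW.
Qed.

Let cc := Num.sqrt cc2.
Lemma cc_gt0 : 0 < cc. Proof. by rewrite sqrtr_gt0 cc2_gt0. Qed.
Lemma cc_sqr : cc ^+ 2 = cc2. Proof. by rewrite sqr_sqrtr // ltW // cc2_gt0. Qed.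

Definition zz (v : 'rV[R]_(N + N)) (j : 'I_N) : C :=
  (v ord0 (lshift N j)) +i* (v ord0 (rshift N j)).
Definition UU (v : 'rV[R]_(N + N)) : 'cV[C]_N :=
  \col_j ((cc / Num.max 1 (nc (zz v j)))%:C * zz v j).

Lemma UU_box v : inbox (UU v).
Proof.
move=> j; rewrite mxE cabs2M cabs2R -nc_sqr -cc_sqr.
set m := Num.max 1 _.
have m1 : 1 <= m by rewrite le_max lexx.
have mp : 0 < m by apply: lt_le_trans m1.
have hz : nc (zz v j) <= m by rewrite le_max lexx orbT.
have hc := cc_gt0.
rewrite -exprMn; apply: sq_mono.
  by rewrite mulr_ge0 ?nc_ge0 ?divr_ge0 // ltW.
by rewrite mulrAC ler_pdivrMr // ler_wpM2l // ltW.
Qed.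

Lemma Re_le (z : C) : `|complex.Re z| <= nc z.
Proof.
rewrite /nc cabs2E -sqrtr_sqr ler_sqrt ?lerDl ?sqr_ge0 //.
by rewrite addr_ge0 ?sqr_ge0.
Qed.

Lemma Im_le (z : C) : `|complex.Im z| <= nc z.
Proof.
rewrite /nc cabs2E -sqrtr_sqr ler_sqrt ?lerDr ?sqr_ge0 //.
by rewrite addr_ge0 ?sqr_ge0.
Qed.

Definition vv (u : 'cV[C]_N) : 'rV[R]_(N + N) :=
  row_mx (\row_j (complex.Re (u j 0) / cc)) (\row_j (complex.Im (u j 0) / cc)).

Lemma box_nc u j : inbox u -> nc (u j 0) <= cc.
Proof.
move=> hu; apply: nc_le_sqrt; last exact: ltW cc_gt0.
by rewrite cc_sqr.
Qed.

Lemma UU_vv u : inbox u -> UU (vv u) = u.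
Proof.
move=> hu; apply/matrixP => j k; rewrite ord1 mxE.
have hc := cc_gt0.
have ez : zz (vv u) j = u j 0 * (cc^-1)%:C.
  rewrite /zz /vv row_mxEl row_mxEr !mxE.
  case: (u j 0) => a b /=.
  by apply/eqP; rewrite eq_complex /=; apply/andP; split; apply/eqP; ring.
have hn : nc (zz (vv u) j) <= 1.
  rewrite ez ncM ncR normfV (ger0_norm (ltW hc)) ler_pdivrMr // mul1r.
  exact: box_nc.
by rewrite max_l // divr1 ez mulrCA -RCM mulfV ?gt_eqF // mulr1.
Qed.

Lemma vv_in u : inbox u ->
  ([set v : 'rV[R]_(N + N) | forall i, `[-1, 1]%classic (v ord0 i)])%classic (vv u).
Proof.
move=> hu i; have hc := cc_gt0.
rewrite /= in_itv /= -ler_norml.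
case: (split_ordP i) => j -> ; rewrite /vv ?row_mxEl ?row_mxEr mxE.
  rewrite normrM normfV (ger0_norm (ltW hc)) ler_pdivrMr // mul1r.
  exact: le_trans (Re_le _) (box_nc j hu).
rewrite normrM normfV (ger0_norm (ltW hc)) ler_pdivrMr // mul1r.
exact: le_trans (Im_le _) (box_nc j hu).
Qed.

Lemma cc_real (a : 'rV[R]_(N + N) -> R) : rc a -> ccr (fun v => (a v)%:C).
Proof. by move=> ha; split => //; exact: rc_cst. Qed.

Lemma cont_f : continuous (fun v => psi (UU v)).
Proof.
have hz j : ccr (fun v => zz v j) by apply: cc_mk; exact: rc_coord.
have hU j : ccr (fun v => (cc / Num.max 1 (nc (zz v j)))%:C * zz v j).
  apply: cc_mul (hz j); apply: cc_real; apply: rc_mul; first exact: rc_cst.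
  apply: rc_inv.
    by move=> v; rewrite gt_eqF // (lt_le_trans ltr01) // le_max lexx.
  by apply: rc_max; [exact: rc_cst | exact: rc_nc].
rewrite /psi.
under [X in continuous X]funext => v do rewrite !frob_col /nsq.
under [X in continuous X]funext => v do under eq_bigr => k _ do rewrite mxE.
apply: rc_add.
  apply: rc_sqrt; apply: rc_sum => k; apply: rc_cabs2.
  under [X in ccr X]funext => v do under eq_bigr => j _ do rewrite mxE.
  apply: cc_sum => j; apply: cc_mul; first exact: cc_cst.
  exact: hU.
apply: rc_opp; apply: rc_mul; first exact: rc_cst.
apply: rc_sqrt; apply: rc_sum => j; apply: rc_cabs2.
under [X in ccr X]funext => v do rewrite mxE.
exact: hU.
Qed.

Lemma evt : exists us, inbox us /\ forall u, inbox u -> psi u <= psi us.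
Proof.
set B := ([set v : 'rV[R]_(N + N) | forall i, `[-1, 1]%classic (v ord0 i)])%classic.
have hB : compact B.
  have := @rV_compact R (N + N) (fun _ => `[-1, 1]%classic) (fun _ => @segment_compact R (-1) 1).
  exact.
have hB0 : (B !=set0)%classic.
  by exists 0 => i /=; rewrite mxE in_itv /= lerN10 ler01.
have [vs vsB vsmax] := EVT_max_rV hB0 hB (continuous_subspaceT (A:=B) cont_f).
exists (UU vs); split; first exact: UU_box.
move=> u hu; rewrite -(UU_vv hu); apply: vsmax.
by rewrite inE; exact: vv_in.
Qed.

Lemma final : exists (W : 'M[R[i]]_N) (r : 'cV[R[i]]_Md) (w : 'cV[R[i]]_N),
    optimal Ps Pr sr2 sd2 eps Ht g W r /\
    W = ((Num.sqrt (Pr / (Ps * frob g ^+ 2 + sr2)) / frob g)%:C)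
          *: (w *m hermT g).
Proof.
have [us [h1 h2]] := evt.
have [r hr] := main_opt h1 h2.
have hc := cc_gt0; have hG := G_gt0.
exists (us *m hermT g), r, ((cc^-1)%:C *: us); split => //.
have -> : Num.sqrt (Pr / (Ps * frob g ^+ 2 + sr2)) / frob g = cc.
  have hPG : 0 < Ps * G + sr2 by rewrite ltr_wpDl ?mulr_ge0 // ltW.
  rewrite frob_col_sqr frob_col -/G /cc /cc2 [RHS]sqrtrM ?sqrtrV ?ltW //.
  by rewrite divr_gt0.
by apply/matrixP => i j; rewrite !mxE big_ord1 !mxE big_ord1 mxE !mulrA -RCM mulfV ?gt_eqF // mul1r hermTE.
Qed.

End Main.

Theorem lemma1 (R : realType) (N Md : nat) (Ps Pr sr2 sd2 eps : R)
  (Ht : 'M[R[i]]_(Md, N)) (g : 'cV[R[i]]_N) :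
  (0 < N)%N -> (0 < Md)%N ->
  0 < Ps -> 0 < Pr -> 0 < sr2 -> 0 < sd2 -> 0 <= eps ->
  g != 0 ->
  exists (W : 'M[R[i]]_N) (r : 'cV[R[i]]_Md) (w : 'cV[R[i]]_N),
    optimal Ps Pr sr2 sd2 eps Ht g W r /\
    W = ((Num.sqrt (Pr / (Ps * frob g ^+ 2 + sr2)) / frob g)%:C)
          *: (w *m hermT g).
Proof.
move=> hN hMd hPs hPr hsr hsd heps hg.
exact: final.
Qed.
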